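(* Let $U$ and $V$ be distinct Euclidean discs in $\mathbb{C}$ with centres $u,v$ and radii $r,s$ respectively, with $V\subset U$. Suppose that for some point $z\in\Pi(U)$, $$\frac{r}{s}<\min\left\{2,\ 1+\tfrac18\sinh\rho(z,\Pi(V))\right\}.$$ Then $h(z)<s/2$. Moreover, if $w$ is the point of $\Pi(V)$ with $h(w)=h(z)$ that is closest in Euclidean distance to $z$, then $|z-w|<3(r-s)$.
   Context: $\mathbb{H}^3=\{(x,y,t)\in\mathbb{R}^3:t>0\}$ with the hyperbolic metric $\rho$ given by the density $ds/t$, and $\mathbb{C}$ is identified with the plane $t=0$. For $z=(x,y,t)\in\mathbb{H}^3$, $h(z)=t$. For a Euclidean disc $D\subset\mathbb{C}$ with centre $c$ and radius $r$, $\Pi(D)=\{z\in\mathbb{H}^3:|z-c|=r\}$ is the hyperbolic plane (hemisphere) over $D$; $\rho(z,\Pi(V))$ is the hyperbolic distance from $z$ to this plane. $|\cdot|$ is the Euclidean norm in $\mathbb{R}^3$. *)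

(* Defs.v *)
From Stdlib Require Import Reals.
Open Scope R_scope.

(* Points of C = R^2 and of the closed upper half space R^3 (t >= 0 allowed
   only for C embedded as t = 0; H^3 points additionally satisfy t > 0). *)
Definition pt3 : Type := (R * R * R)%type.
Definition cx (p : R * R) : R := fst p.
Definition cy (p : R * R) : R := snd p.
Definition px (z : pt3) : R := fst (fst z).
Definition py (z : pt3) : R := snd (fst z).
Definition h (z : pt3) : R := snd z.

Definition inH3 (z : pt3) : Prop := 0 < h z.

Definition edist (p q : pt3) : R :=
  sqrt ((px p - px q)^2 + (py p - py q)^2 + (h p - h q)^2).

Definition cdist (a b : R * R) : R :=
  sqrt ((cx a - cx b)^2 + (cy a - cy b)^2).

Definition embC (c : R * R) : pt3 := (cx c, cy c, 0).

Definition edisc (c : R * R) (r : R) : (R * R) -> Prop :=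
  fun w => cdist w c <= r.

Definition Pi (c : R * R) (r : R) (z : pt3) : Prop :=
  inH3 z /\ edist z (embC c) = r.

Definition arcosh (x : R) : R := ln (x + sqrt (x^2 - 1)).

(* hyperbolic distance for the metric ds/t on the upper half space:
   cosh rho(p,q) = 1 + |p-q|^2 / (2 h(p) h(q)) *)
Definition rho (p q : pt3) : R :=
  arcosh (1 + (edist p q)^2 / (2 * h p * h q)).

Definition is_inf (E : R -> Prop) (m : R) : Prop :=
  (forall x, E x -> m <= x) /\ (forall b, (forall x, E x -> b <= x) -> b <= m).

Definition rho_plane (z : pt3) (c : R * R) (r : R) (d : R) : Prop :=
  is_inf (fun x => exists w, Pi c r w /\ x = rho z w) d.

(* Main.v *)
Require Import Defs.
From Stdlib Require Import Reals Lra Psatz.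
Open Scope R_scope.

Lemma sqrt_eq_sq (x y : R) : 0 <= y -> x = y ^ 2 -> sqrt x = y.
Proof. intros Hy ->. now apply sqrt_pow2. Qed.

Lemma sq_of_sqrt_eq (x y : R) : 0 <= x -> sqrt x = y -> x = y ^ 2.
Proof. intros Hx <-. simpl. rewrite Rmult_1_r. now rewrite sqrt_sqrt. Qed.

Lemma sinh_le (x y : R) : x <= y -> sinh x <= sinh y.
Proof. intros [H|H]. left; now apply sinh_lt. subst; lra. Qed.

Lemma contain (u1 u2 v1 v2 r s : R) : 0 < s ->
  (forall w, edisc (v1,v2) s w -> edisc (u1,u2) r w) ->
  sqrt ((u1-v1)^2 + (u2-v2)^2) + s <= r.
Proof.
  intros Hs H.
  remember (sqrt ((u1-v1)^2 + (u2-v2)^2)) as a eqn:Ea.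
  assert (Ha0 : 0 <= a) by (rewrite Ea; apply sqrt_pos).
  assert (Haa : a * a = (u1-v1)^2 + (u2-v2)^2) by (rewrite Ea; apply sqrt_sqrt; apply Rplus_le_le_0_compat; apply pow2_ge_0).
  destruct Ha0 as [Ha|Ha].
  - specialize (H (v1 + s*(v1-u1)/a, v2 + s*(v2-u2)/a)).
    unfold edisc, cdist, cx, cy in H; simpl fst in H; simpl snd in H.
    assert (E1 : sqrt ((v1 + s*(v1-u1)/a - v1)^2 + (v2 + s*(v2-u2)/a - v2)^2) = s).
    { apply sqrt_eq_sq; [lra|].
      replace ((v1 + s*(v1-u1)/a - v1)^2 + (v2 + s*(v2-u2)/a - v2)^2)
        with (s^2 * ((u1-v1)^2 + (u2-v2)^2) / (a*a)) by (field; lra).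
      rewrite <- Haa. field; lra. }
    assert (E2 : sqrt ((v1 + s*(v1-u1)/a - u1)^2 + (v2 + s*(v2-u2)/a - u2)^2) = a + s).
    { apply sqrt_eq_sq; [lra|].
      replace ((v1 + s*(v1-u1)/a - u1)^2 + (v2 + s*(v2-u2)/a - u2)^2)
        with ((a+s)^2 * ((u1-v1)^2 + (u2-v2)^2) / (a*a)) by (field; lra).
      rewrite <- Haa. field; lra. }
    rewrite E1, E2 in H. apply H; lra.
  - rewrite <- Ha in Haa.
    pose proof (pow2_ge_0 (u1-v1)). pose proof (pow2_ge_0 (u2-v2)).
    assert (K1 : (u1-v1)^2 = 0) by lra. assert (K2 : (u2-v2)^2 = 0) by lra.
    assert (u1 = v1) by (clear H; nra). assert (u2 = v2) by (clear H; nra). subst.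
    specialize (H (v1 + s, v2)).
    unfold edisc, cdist, cx, cy in H; simpl fst in H; simpl snd in H.
    assert (E1 : sqrt ((v1 + s - v1)^2 + (v2 - v2)^2) = s).
    { apply sqrt_eq_sq; [lra|]. ring. }
    rewrite E1 in H. rewrite <- Ha. lra.
Qed.
Lemma div_nonneg a b : 0 <= a -> 0 < b -> 0 <= a / b.
Proof. intros; unfold Rdiv; apply Rmult_le_pos; [auto| left; apply Rinv_0_lt_compat; auto]. Qed.

Lemma foot (zx zy t v1 v2 s : R) : 0 < t -> 0 < s ->
  s^2 <= (zx-v1)^2 + (zy-v2)^2 + t^2 ->
  exists w, Pi (v1,v2) s w /\
    sinh (rho ((zx,zy),t) w) = ((zx-v1)^2 + (zy-v2)^2 + t^2 - s^2) / (2*t*s).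
Proof.
  intros Ht Hs HD.
  remember ((zx-v1)^2 + (zy-v2)^2 + t^2 - s^2) as E eqn:HE.
  assert (HE0 : 0 <= E) by lra.
  remember ((zx-v1)^2 + (zy-v2)^2 + t^2 + s^2) as M eqn:HM.
  pose proof (pow2_ge_0 (zx-v1)). pose proof (pow2_ge_0 (zy-v2)).
  assert (Hs2 : 0 < s^2) by (apply pow_lt; lra).
  assert (Ht2 : 0 < t^2) by (apply pow_lt; lra).
  assert (HM0 : 0 < M) by lra.
  assert (Hq0 : 0 <= E^2 + 4*s^2*t^2) by (pose proof (pow2_ge_0 E); nra).
  remember (sqrt (E^2 + 4*s^2*t^2)) as Q eqn:HQd.
  assert (HQ : Q*Q = E^2 + 4*s^2*t^2) by (subst Q; apply sqrt_sqrt; auto).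
  assert (HQ0 : 0 <= Q) by (subst Q; apply sqrt_pos).
  assert (HQp : 0 < Q).
  { destruct HQ0 as [?|HQ0]; auto. rewrite <- HQ0 in HQ. 
    assert (0 < 4*s^2*t^2) by (repeat apply Rmult_lt_0_compat; lra).
    pose proof (pow2_ge_0 E). lra. }
  clear HQd.
  exists ((v1 + 2*s^2*(zx-v1)/M, v2 + 2*s^2*(zy-v2)/M), s*Q/M).
  split.
  - unfold Pi, inH3, edist, embC, h, px, py, cx, cy; cbn [fst snd].
    split. { apply Rdiv_lt_0_compat; [nra | repeat apply Rmult_lt_0_compat; lra]. }
    apply sqrt_eq_sq; [lra|].
    replace ((v1 + 2*s^2*(zx-v1)/M - v1)^2 + (v2 + 2*s^2*(zy-v2)/M - v2)^2 + (s*Q/M - 0)^2)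
      with ((4*s^4*((zx-v1)^2+(zy-v2)^2) + s^2*(Q*Q))/(M*M)) by (field; lra).
    rewrite HQ, HE. subst M. field. lra.
  - unfold rho, edist, h, px, py; cbn [fst snd].
    rewrite pow2_sqrt by (repeat apply Rplus_le_le_0_compat; apply pow2_ge_0).
    replace ((zx - (v1 + 2*s^2*(zx-v1)/M))^2 + (zy - (v2 + 2*s^2*(zy-v2)/M))^2 + (t - s*Q/M)^2)
      with ((((zx-v1)^2+(zy-v2)^2)*(M-2*s^2)^2 + t^2*M^2 - 2*t*s*M*Q + s^2*(Q*Q))/(M*M))
      by (field; lra).
    rewrite HQ.
    replace (1 + (((zx-v1)^2+(zy-v2)^2)*(M-2*s^2)^2 + t^2*M^2 - 2*t*s*M*Q + s^2*(E^2 + 4*s^2*t^2))/(M*M) / (2*t*(s*Q/M)))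
      with (Q/(2*t*s)).
    2:{ replace (Q/(2*t*s)) with ((Q*Q)/(2*t*s*Q)) by (field; lra). rewrite HQ. rewrite HE, HM. field. repeat split; lra. }
    unfold arcosh.
    replace (sqrt ((Q/(2*t*s))^2 - 1)) with (E/(2*t*s)).
    2:{ symmetry. apply sqrt_eq_sq.
        - apply div_nonneg; [lra | repeat apply Rmult_lt_0_compat; lra].
        - replace ((Q/(2*t*s))^2) with (Q*Q/(4*t^2*s^2)) by (field; lra).
          rewrite HQ. field. lra. }
    assert (Hy : 0 < Q/(2*t*s) + E/(2*t*s)).
    { assert (0 < Q/(2*t*s)) by (apply Rdiv_lt_0_compat; [nra | repeat apply Rmult_lt_0_compat; lra]).
      assert (0 <= E/(2*t*s)) by (apply div_nonneg; [lra | repeat apply Rmult_lt_0_compat; lra]). lra. }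
    assert (Hinv : / (Q/(2*t*s) + E/(2*t*s)) = (Q - E)/(2*t*s)).
    { assert (K : (Q/(2*t*s) + E/(2*t*s)) * ((Q - E)/(2*t*s)) = 1).
      { replace ((Q/(2*t*s) + E/(2*t*s)) * ((Q - E)/(2*t*s)))
          with ((Q*Q - E^2)/(4*t^2*s^2)) by (field; lra).
        rewrite HQ. field. lra. }
      rewrite <- (Rmult_1_r (/ _)), <- K, <- Rmult_assoc, Rinv_l by lra. ring. }
    unfold sinh. rewrite exp_Ropp, exp_ln by exact Hy. rewrite Hinv. field. lra.
Qed.

Lemma sq_bound c m : 0 <= m -> c^2 <= m*m -> c <= m /\ - m <= c.
Proof. intros. split; nra. Qed.

Theorem lemma5p1 (u v : R * R) (r s : R) (z : pt3) (d : R) :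
  0 < r -> 0 < s ->
  (u, r) <> (v, s) ->
  (forall w, edisc v s w -> edisc u r w) ->
  Pi u r z ->
  rho_plane z v s d ->
  r / s < Rmin 2 (1 + sinh d / 8) ->
  h z < s / 2 /\
  (forall w : pt3,
     Pi v s w -> h w = h z ->
     (forall w' : pt3, Pi v s w' -> h w' = h z -> edist z w <= edist z w') ->
     edist z w < 3 * (r - s)).
Proof.
  intros Hr Hs _ Hsub HPi Hrho Hmin.
  destruct u as [u1 u2], v as [v1 v2], z as [[zx zy] t].
  pose proof (contain u1 u2 v1 v2 r s Hs Hsub) as Ha. clear Hsub.
  remember (sqrt ((u1-v1)^2 + (u2-v2)^2)) as a eqn:Ea.
  assert (Ha0 : 0 <= a) by (rewrite Ea; apply sqrt_pos).
  assert (Haa : a * a = (u1-v1)^2 + (u2-v2)^2)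
    by (rewrite Ea; apply sqrt_sqrt; apply Rplus_le_le_0_compat; apply pow2_ge_0).
  clear Ea.
  destruct HPi as [Ht Hz].
  unfold inH3, h in Ht; cbn [fst snd] in Ht.
  unfold edist, embC, h, px, py, cx, cy in Hz; cbn [fst snd] in Hz.
  apply sq_of_sqrt_eq in Hz;
    [| repeat apply Rplus_le_le_0_compat; apply pow2_ge_0].
  set (A := (zx-u1)^2 + (zy-u2)^2).
  assert (HA : A = r^2 - t^2) by (unfold A; lra).
  assert (HA0 : 0 <= A) by (unfold A; apply Rplus_le_le_0_compat; apply pow2_ge_0).
  remember (sqrt A) as RA eqn:ERA.
  assert (HRA0 : 0 <= RA) by (rewrite ERA; apply sqrt_pos).
  assert (HRA : RA * RA = A) by (rewrite ERA; apply sqrt_sqrt; auto).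
  clear ERA.
  set (c := (zx-u1)*(u1-v1) + (zy-u2)*(u2-v2)).
  assert (Hcs : c^2 <= A * (a*a)).
  { rewrite Haa. unfold c, A.
    assert (0 <= ((zx-u1)*(u2-v2) - (zy-u2)*(u1-v1))^2) by apply pow2_ge_0.
    assert (((zx-u1)^2 + (zy-u2)^2) * ((u1-v1)^2 + (u2-v2)^2) - ((zx-u1)*(u1-v1) + (zy-u2)*(u2-v2))^2
       = ((zx-u1)*(u2-v2) - (zy-u2)*(u1-v1))^2) by ring. lra. }
  assert (Hc : c <= RA * a /\ - (RA * a) <= c).
  { apply sq_bound. apply Rmult_le_pos; auto. rewrite <- HRA in Hcs. lra. }
  assert (HRAr : RA <= r) by (clear - HRA HA HRA0 Hr Ht; nra).
  assert (HRAa : RA * a <= r * a) by (apply Rmult_le_compat_r; auto).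
  set (D2 := (zx-v1)^2 + (zy-v2)^2 + t^2).
  assert (HD2 : D2 = A + 2*c + a*a + t^2) by (unfold D2, A, c; rewrite Haa; ring).
  assert (HDlow : s^2 <= D2) by (clear - HD2 HA Hc HRAa Ha Ha0 Hs; nra).
  assert (HDup : D2 - s^2 <= 4 * r * (r - s)) by (clear - HD2 HA Hc HRAa Ha Ha0 Hs; nra).
  destruct (foot zx zy t v1 v2 s Ht Hs HDlow) as [w0 [Hw0 Hsh]].
  fold D2 in Hsh.
  destruct Hrho as [Hlow _].
  assert (Hd : d <= rho (zx,zy,t) w0) by (apply Hlow; exists w0; auto).
  apply sinh_le in Hd. rewrite Hsh in Hd.
  pose proof (Rmin_l 2 (1 + sinh d / 8)) as Hm1.
  pose proof (Rmin_r 2 (1 + sinh d / 8)) as Hm2.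
  assert (Hrs : r / s * s = r) by (field; lra).
  set (q := r / s) in *.
  set (k := sinh d) in *.
  set (K := (D2 - s^2) / (2*t*s)) in *.
  assert (HK : K * (2*t*s) = D2 - s^2) by (unfold K; field; lra).
  assert (Hr2 : r < 2 * s) by nra.
  assert (Hq1 : r < s + s * k / 8) by nra.
  assert (HsK : s * k <= s * K) by (apply Rmult_le_compat_l; lra).
  assert (Hmain : 16 * t * (r - s) < D2 - s^2) by nra.
  assert (He : 0 < r - s) by nra.
  assert (Ht4 : t < r / 4) by nra.
  split.
  { unfold h; cbn [fst snd]. lra. }
  intros w Hw Hhw Hminw.
  unfold h in Hhw; cbn [fst snd] in Hhw.
  assert (HS0 : 0 <= s^2 - t^2) by nra.
  remember (sqrt (s^2 - t^2)) as S eqn:ES.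
  assert (HSp : 0 <= S) by (rewrite ES; apply sqrt_pos).
  assert (HSS : S * S = s^2 - t^2) by (rewrite ES; apply sqrt_sqrt; auto).
  clear ES.
  assert (Hp0 : 0 <= (zx-v1)^2 + (zy-v2)^2) by (apply Rplus_le_le_0_compat; apply pow2_ge_0).
  remember (sqrt ((zx-v1)^2 + (zy-v2)^2)) as p eqn:Ep.
  assert (Hpp : 0 <= p) by (rewrite Ep; apply sqrt_pos).
  assert (Hp2 : p * p = (zx-v1)^2 + (zy-v2)^2) by (rewrite Ep; apply sqrt_sqrt; auto).
  clear Ep.
  assert (HpSS : S * S <= p * p) by (unfold D2 in HDlow; lra).
  assert (HpS : S <= p) by (clear - HpSS HSp Hpp; nra).
  assert (HS0p : 0 < S * S) by (clear - HSS Ht Hs Ht4 Hr2; nra).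
  assert (Hppos : 0 < p) by (clear - HpSS HS0p HSp Hpp; nra).
  assert (Hw0' : Pi (v1,v2) s ((v1 + S*(zx-v1)/p, v2 + S*(zy-v2)/p), t)).
  { unfold Pi, inH3, edist, embC, h, px, py, cx, cy; cbn [fst snd].
    split; auto. apply sqrt_eq_sq; [lra|].
    replace ((v1 + S*(zx-v1)/p - v1)^2 + (v2 + S*(zy-v2)/p - v2)^2 + (t - 0)^2)
      with ((S*S) * ((zx-v1)^2 + (zy-v2)^2) / (p*p) + t^2) by (field; lra).
    rewrite <- Hp2, HSS. field. lra. }
  specialize (Hminw _ Hw0').
  unfold h in Hminw; cbn [fst snd] in Hminw.
  specialize (Hminw eq_refl).
  assert (Hdz : edist (zx,zy,t) ((v1 + S*(zx-v1)/p, v2 + S*(zy-v2)/p), t) = p - S).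
  { unfold edist, h, px, py; cbn [fst snd].
    apply sqrt_eq_sq; [lra|].
    replace ((zx - (v1 + S*(zx-v1)/p))^2 + (zy - (v2 + S*(zy-v2)/p))^2 + (t - t)^2)
      with ((p - S)^2 * ((zx-v1)^2 + (zy-v2)^2) / (p*p)) by (field; lra).
    rewrite <- Hp2. field. lra. }
  rewrite Hdz in Hminw.
  assert (Hpup : p <= RA + a).
  { assert (p * p <= (RA + a) * (RA + a)).
    { rewrite Hp2.
      assert (E1 : (zx-v1)^2+(zy-v2)^2 = A + 2*c + a*a) by (unfold D2 in HD2; lra).
      rewrite E1, <- HRA.
      replace ((RA + a) * (RA + a)) with (RA*RA + 2*(RA*a) + a*a) by ring. lra. }
    clear - H Hpp HRA0 Ha0; nra. }
  assert (HRAS : RA - S < 2 * (r - s)).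
  { assert (RA * RA > r^2 / 4) by nra.
    assert (RA > r / 2) by nra.
    assert (S > s / 2) by nra.
    assert ((RA - S) * (RA + S) = (r - s) * (r + s)) by nra.
    nra. }
  lra.
Qed.
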